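(* For all integers $t\ge 4$ and $r\ge 3$, $C_r(n,M_t)=\Omega\!\left(n^{\frac{1}{2r+1}}\right)$ as $n\to\infty$, where $M_t$ is the $r$-graph consisting of $t$ pairwise disjoint edges.
   Context: An $r$-graph is an $r$-uniform hypergraph; $K_n^{(r)}$ is the complete $r$-graph on $n$ vertices. A copy of an $r$-graph $H$ in $K_n^{(r)}$ is a subhypergraph isomorphic to $H$. An $(n,r,H)$-local coloring with $k$ colors is a family of edge-colorings $f_v:E(K_n^{(r)})\to[k]$, one per vertex $v$, such that for every copy $T$ of $H$ there is $u\in V(T)$ with $f_u$ injective on $E(T)$. $C_r(n,H)$ is the minimum such $k$. *)

(* Defs.v *)
From mathcomp Require Import all_boot.


Definition Kedges (n r : nat) : {set {set 'I_n}} := [set e : {set 'I_n} | #|e| == r].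

Definition copy_Mt (n r t : nat) (T : {set {set 'I_n}}) : bool :=
  [&& T \subset Kedges n r, #|T| == t &
      [forall e1 in T, forall e2 in T, (e1 != e2) ==> [disjoint e1 & e2]]].

Definition hverts (n : nat) (T : {set {set 'I_n}}) : {set 'I_n} :=
  \bigcup_(e in T) e.

(* An (n,r,M_t)-local coloring with k colors: for each vertex v an edge
   coloring f v (values on non-edges are irrelevant). *)
Definition local_coloring (n r t k : nat)
    (f : 'I_n -> {set 'I_n} -> 'I_k) : Prop :=
  forall T, copy_Mt n r t T ->
    exists2 u, u \in hverts n T & {in T &, injective (f u)}.

Definition has_local_coloring (n r t k : nat) : Prop :=
  exists f : 'I_n -> {set 'I_n} -> 'I_k, local_coloring n r t k f.

(* Main.v *)
Require Import Defs.
From Stdlib Require Import Reals.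
From mathcomp Require Import all_boot zify.
Set Implicit Arguments. Unset Strict Implicit. Unset Printing Implicit Defensive.

Lemma subset_card (T : finType) (X : {set T}) r :
  r <= #|X| -> exists Y : {set T}, Y \subset X /\ #|Y| = r.
Proof.
elim: r => [|r IH] H; first by exists set0; rewrite sub0set cards0.
have [Y [sYX cY]] := IH (ltnW H).
have : 0 < #|X :\: Y| by rewrite cardsD (setIidPr sYX) cY subn_gt0.
case/card_gt0P => x; rewrite inE => /andP [xY xX].
exists (x |: Y); rewrite subUset sub1set xX sYX cardsU1 xY cY //.
Qed.

Lemma matching (T : finType) (r a : nat) (X : {set T}) : a * r <= #|X| ->
  exists d : nat -> {set T},
    [/\ (forall l, l < a -> d l \subset X /\ #|d l| = r),
        (forall l l', l < a -> l' < a -> l != l' -> [disjoint d l & d l']) &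
        exists O : {set T}, [/\ O \subset X, #|X| - a * r <= #|O| &
                               forall l, l < a -> [disjoint d l & O]]].
Proof.
elim: a X => [|a IH] X H.
  exists (fun _ => set0); split => //; exists X; split => //; lia.
have hr : r <= #|X| by rewrite mulSn in H; lia.
have [Y [sYX cY]] := subset_card hr.
have cX' : #|X :\: Y| = #|X| - r by rewrite cardsD (setIidPr sYX) cY.
have [d' [H1 H2 [O [sO cO dO]]]] := IH (X :\: Y) (ltac:(rewrite cX'; lia)).
have sub : forall Z : {set T}, Z \subset X :\: Y -> [disjoint Y & Z].
  move=> Z; rewrite subsetD => /andP [_ h].
  by rewrite fintype.disjoint_sym.
have subX : X :\: Y \subset X by apply: subsetDl.
exists (fun l => if l is l'.+1 then d' l' else Y); split.
- case=> [|l] //= Hl; have [s c] := H1 l Hl; split => //; exact: subset_trans s subX.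
- case=> [|l] [|l'] //= Hl Hl' Hne.
  + exact: sub (proj1 (H1 _ Hl')).
  + rewrite disjoint_sym; exact: sub (proj1 (H1 _ Hl)).
  + exact: H2.
- exists O; split.
  + exact: subset_trans sO subX.
  + rewrite cX' in cO; lia.
  + case=> [|l] //= Hl; [exact: sub sO | exact: dO].
Qed.
Lemma card_sum (T : finType) (b : pred T) : #|[set x | b x]| = \sum_x (b x : nat).
Proof.
rewrite -sum1_card big_mkcond /=; apply: eq_bigr => x _; rewrite inE; by case: (b x).
Qed.

Lemma pairs_count (k m : nat) (c : 'I_m -> 'I_k) :
  m - k <= #|[set p : 'I_m * 'I_m | (p.1 < p.2) && (c p.1 == c p.2)]|.
Proof.
set P := [set p : 'I_m * 'I_m | _].
set Q := [set i : 'I_m | [exists j : 'I_m, (j < i) && (c j == c i)]].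
have QP : Q \subset (@snd _ _) @: P.
  apply/subsetP => i; rewrite inE => /existsP [j hj].
  by apply/imsetP; exists (j, i) => //; rewrite inE.
have h1 : #|Q| <= #|P| := leq_trans (subset_leq_card QP) (leq_imset_card _ _).
have h2 : #|~: Q| <= k.
  rewrite -(card_in_imset (f := c)); first by apply: leq_trans (max_card _) _; rewrite card_ord.
  move=> i j; rewrite !inE => /existsPn hi /existsPn hj eqij.
  apply/eqP; case: (ltngtP i j) => // h.
  - by move: (hj i); rewrite h eqij eqxx.
  - by move: (hi j); rewrite h eqij eqxx.
  - by apply/eqP; apply: val_inj.
have := cardsC Q; rewrite card_ord; lia.
Qed.

Lemma heavy_pair (n m k L : nat) (O : {set 'I_n}) (F : 'I_n -> 'I_m * 'I_m -> bool) :
  (forall u, u \in O -> m - k <= #|[set p | F u p]|) ->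
  m * m * L < #|O| * (m - k) ->
  exists p, L < #|[set u | F u p]|.
Proof.
move=> HO Hlt; case: (boolP [exists p, L < #|[set u | F u p]|]) => [/existsP //|/existsPn Hall]; exfalso.
have e : \sum_u #|[set p | F u p]| = \sum_p #|[set u | F u p]|.
  rewrite (eq_bigr (fun u => \sum_p (F u p : nat))); last by move=> u _; rewrite card_sum.
  rewrite exchange_big /=; apply: eq_bigr => p _; by rewrite card_sum.
have lo : #|O| * (m - k) <= \sum_u #|[set p | F u p]|.
  rewrite -sum1_card big_distrl /= (big_mkcond (fun u => u \in O)) /=.
  apply: leq_sum => u _; case: ifP => // uO; rewrite mul1n; exact: HO.
have hi : \sum_p #|[set u | F u p]| <= m * m * L.
  apply: leq_trans (_ : \sum_(p : 'I_m * 'I_m) L <= _).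
    by apply: leq_sum => p _; have := Hall p; rewrite -leqNgt.
  by rewrite sum_nat_const card_prod card_ord mulnC.
lia.
Qed.
Lemma pigeon_vec (n k K : nat) (D : {set 'I_n}) (g : nat -> 'I_n -> 'I_k) :
  k ^ #|D| < K -> exists l1 l2, [/\ l1 < K, l2 < K, l1 != l2 &
                                  forall u, u \in D -> g l1 u = g l2 u].
Proof.
move=> HK.
case: (boolP [exists l1 : 'I_K, exists l2 : 'I_K,
          (l1 != l2) && [forall u in D, g l1 u == g l2 u]]).
  case/existsP => l1 /existsP [l2 /andP [ne /forall_inP H]].
  exists (val l1), (val l2); split; [exact: ltn_ord|exact: ltn_ord|exact: ne|move=> u uD; exact/eqP/H].
move=> /existsPn Hn; exfalso.
pose R := [set Some c | c : 'I_k].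
pose h (l : 'I_K) := [ffun u => if u \in D then Some (g l u) else None].
have hinj : injective h.
  move=> l1 l2 e; apply/eqP; apply: contraT => ne.
  move: (Hn l1) => /existsPn /(_ l2); rewrite ne /= => H; case/negP: H; apply/forall_inP => u uD; apply/eqP.
  by move/ffunP: e => /(_ u); rewrite !ffunE uD => -[->].
have sub : h @: setT \subset pffun_on None D R.
  apply/subsetP => _ /imsetP [l _ ->]; apply/pffun_onP; split.
    apply/subsetP => u; rewrite inE ffunE; by case: (u \in D).
  move=> _ /imageP [u uD ->]; rewrite ffunE uD; apply/imsetP; by exists (g l u).
have := subset_leq_card sub.
rewrite card_pffun_on card_imset // cardsT card_ord.
have -> : #|R| = k by rewrite card_imset ?card_ord //; move=> x y [].
lia.
Qed.

Lemma no_coloring (n r t k : nat) : 0 < r -> 4 <= t -> 0 < k ->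
  (8 * r + 4 * r * t) * k ^ (2 * r + 1) <= n -> ~ has_local_coloring n r t k.
Proof.
move=> hr ht hk hn [f Hf].
pose m := 2 * k. pose K2 := k ^ (2 * r). pose L0 := r * (K2 + t).
have K2pos : 0 < K2 by rewrite expn_gt0 hk.
have eK : k ^ (2 * r + 1) = k * K2 by rewrite addn1 expnS.
rewrite eK in hn.
have hm : m * r <= #|[set: 'I_n]| by rewrite cardsT card_ord /m; nia.
have [e [He1 He2 [O [_ cO dO]]]] := matching hm.
rewrite cardsT card_ord in cO.
pose F u (p : 'I_m * 'I_m) := [&& u \in O, (p.1 < p.2) & (f u (e p.1) == f u (e p.2))].
have HO : forall u, u \in O -> m - k <= #|[set p | F u p]|.
  move=> u uO.
  have -> : [set p | F u p] = [set p : 'I_m * 'I_m | (p.1 < p.2) && ((fun i : 'I_m => f u (e i)) p.1 == (fun i : 'I_m => f u (e i)) p.2)].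
    by apply/setP => p; rewrite !inE /F uO.
  exact: (pairs_count (fun i : 'I_m => f u (e i))).
have Hlt : m * m * L0 < #|O| * (m - k).
  have -> : m - k = k by rewrite /m; lia.
  rewrite /m /L0; nia.
have [p Hp] := heavy_pair HO Hlt.
set V := [set u | F u p] in Hp.
have VO : V \subset O by apply/subsetP => u; rewrite inE => /and3P [].
have [u0 u0V] : exists u0, u0 \in V.
  by apply/card_gt0P; apply: leq_ltn_trans Hp.
have ji : p.1 < p.2 by move: u0V; rewrite inE => /and3P [].
pose A := e p.1. pose B := e p.2.
have hV : (K2 + t) * r <= #|V| by rewrite mulnC; apply: ltnW.
have [d2 [Hd1 Hd2 _]] := matching hV.
pose D := A :|: B.
have AB : [disjoint A & B].
  apply: He2; [exact: ltn_ord | exact: ltn_ord | by rewrite neq_ltn ji].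
have cD : #|D| = 2 * r.
  rewrite /D cardsU (disjoint_setI0 AB) cards0 (proj2 (He1 _ (ltn_ord _)))
    (proj2 (He1 _ (ltn_ord _))); lia.
have [l1 [l2 [hl1 hl2 nl Hl]]] :=
  @pigeon_vec n k K2.+1 D (fun l u => f u (d2 l)) (ltac:(rewrite cD; exact: ltnSn)).
pose sg a := match a with 0 => l1 | 1 => l2 | a'.+2 => K2.+1 + a' end.
pose E a := match a with 0 => A | 1 => B | a'.+2 => d2 (sg a') end.
have sg_lt : forall a, a.+2 < t -> sg a < K2 + t.
  case=> [|[|a]] /= h; lia.
have sg_inj : forall a b, a != b -> sg a != sg b.
  case=> [|[|a]] [|[|b]] //= h; try lia; by rewrite eq_sym.
have Esub : forall a, a.+2 < t -> E a.+2 \subset O.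
  move=> a h; apply: subset_trans VO; exact: (proj1 (Hd1 _ (sg_lt _ h))).
have Ecard : forall a, a < t -> #|E a| = r.
  case=> [|[|a]] h /=; [exact: (proj2 (He1 _ (ltn_ord _)))|exact: (proj2 (He1 _ (ltn_ord _)))|].
  exact: (proj2 (Hd1 _ (sg_lt _ h))).
have Edisj : forall a b, a < t -> b < t -> a != b -> [disjoint E a & E b].
  have dAO : [disjoint A & O] by apply: dO; exact: ltn_ord.
  have dBO : [disjoint B & O] by apply: dO; exact: ltn_ord.
  case=> [|[|a]] [|[|b]] //= ha hb hab;
    first [ exact: AB | by rewrite fintype.disjoint_sym
          | exact: disjointWr (Esub _ hb) dAO | exact: disjointWr (Esub _ hb) dBO
          | by rewrite fintype.disjoint_sym; exact: disjointWr (Esub _ ha) dAO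
          | by rewrite fintype.disjoint_sym; exact: disjointWr (Esub _ ha) dBO
          | by apply: Hd2; [exact: sg_lt|exact: sg_lt|exact: sg_inj] ].
have Eneq : forall a b, a < t -> b < t -> a != b -> E a != E b.
  move=> a b ha hb hab; apply/eqP => eab.
  have := Edisj a b ha hb hab; rewrite -eab => dd.
  have := Ecard a ha; rewrite -(setIid (E a)) (disjoint_setI0 dd) cards0; lia.
pose T := [set E (val a) | a : 'I_t].
have ET : forall a, a < t -> E a \in T.
  by move=> a ha; apply/imsetP; exists (Ordinal ha).
have cT : copy_Mt n r t T.
  apply/and3P; split.
  - apply/subsetP => _ /imsetP [a _ ->]; rewrite /Kedges inE; apply/eqP; exact: (Ecard _ (ltn_ord a)).
  - rewrite card_imset ?card_ord //; move=> a b eab; apply: val_inj; apply/eqP.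
    apply: contraT => nab; by have := Eneq _ _ (ltn_ord a) (ltn_ord b) nab; rewrite eab eqxx.
  - apply/forall_inP => _ /imsetP [a _ ->]; apply/forall_inP => _ /imsetP [b _ ->].
    apply/implyP => nab; apply: Edisj; [exact: ltn_ord|exact: ltn_ord|]; apply/eqP => eab; by move: nab; rewrite eab eqxx.
have [u uT Hinj] := Hf T cT.
case/bigcupP: uT => _ /imsetP [a _ ->] ua.
have t2 : 2 < t by lia.
have t3 : 3 < t by lia.
move: ua; case: a => [[|[|a]] ha] /= ua.
- have e23 : f u (E 2) = f u (E 3) by apply: Hl; rewrite /D inE ua.
  have := Hinj _ _ (ET _ t2) (ET _ t3) e23; apply/eqP; exact: Eneq.
- have e23 : f u (E 2) = f u (E 3) by apply: Hl; rewrite /D inE ua orbT.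
  have := Hinj _ _ (ET _ t2) (ET _ t3) e23; apply/eqP; exact: Eneq.
- have uV : u \in V by apply: (subsetP (proj1 (Hd1 _ (sg_lt _ ha)))).
  move: uV; rewrite inE => /and3P [_ _ /eqP e01].
  have t0 : 0 < t by lia.
  have t1 : 1 < t by lia.
  have := Hinj _ _ (ET 0 t0) (ET 1 t1) e01.
  by move=> h; move: (Eneq 0 1 t0 t1 isT); rewrite h eqxx.
Qed.

Lemma INR_muln a b : INR (a * b) = Rmult (INR a) (INR b).
Proof. by rewrite -multE mult_INR. Qed.

Lemma INR_expn a e : INR (a ^ e) = pow (INR a) e.
Proof.
elim: e => [|e IH]; first by rewrite expn0.
by rewrite expnS INR_muln IH.
Qed.

Lemma no_coloring0 n r t : 0 < n -> ~ has_local_coloring n r t 0.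
Proof. move=> hn [f _]; by case: (f (Ordinal hn) set0). Qed.

Theorem corollary1 (t r : nat) (ht : 4 <= t) (hr : 3 <= r) :
  exists c : R, Rlt 0 c /\
  exists N : nat, forall n : nat, N <= n ->
    forall k : nat, has_local_coloring n r t k ->
      Rle (Rmult c (Rpower (INR n) (Rinv (INR (2 * r + 1))))) (INR k).
Proof.
pose B := 8 * r + 4 * r * t.
pose e := 2 * r + 1.
have Bpos : Rlt 0 (INR B) by apply: lt_0_INR; apply/ltP; rewrite /B; lia.
have Rp : forall x y, Rlt 0 (Rpower x y) by move=> x y; rewrite /Rpower; apply: exp_pos.
exists (Rinv (Rpower (INR B) (Rinv (INR e)))); split; first by apply: Rinv_0_lt_compat.
exists 1 => n hn k Hk.
have kpos : 0 < k by case: k Hk => // /(no_coloring0 hn).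
have hlt : n < B * k ^ e.
  rewrite ltnNge; apply/negP => h; apply: (no_coloring (r:=r) (t:=t)) Hk => //; lia.
have kR : Rlt 0 (INR k) by apply: lt_0_INR; apply/ltP.
have nR : Rlt 0 (INR n) by apply: lt_0_INR; apply/ltP.
have H1 : Rle (INR n) (Rmult (INR B) (pow (INR k) e)).
  rewrite -INR_expn -INR_muln; apply: le_INR; apply/leP; exact: ltnW.
have ePos : Rlt 0 (INR e) by apply: lt_0_INR; apply/ltP; rewrite /e; lia.
have H2 : Rle (Rpower (INR n) (Rinv (INR e))) (Rmult (Rpower (INR B) (Rinv (INR e))) (INR k)).
  apply: Rle_trans (Rle_Rpower_l _ _ _ _ (conj nR H1)) _.
    by apply: Rlt_le; apply: Rinv_0_lt_compat.
  rewrite -Rpower_mult_distr //; last by apply: pow_lt.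
  rewrite -Rpower_pow // Rpower_mult Rinv_r; last by apply: Rgt_not_eq.
  rewrite Rpower_1 //; exact: Rle_refl.
set P := Rpower (INR B) (Rinv (INR e)) in H2 *.
have PP : Rlt 0 P by apply: Rp.
apply: Rle_trans (Rmult_le_compat_l _ _ _ (Rlt_le _ _ (Rinv_0_lt_compat _ PP)) H2) _.
rewrite -Rmult_assoc Rinv_l; last by apply: Rgt_not_eq.
rewrite Rmult_1_l; exact: Rle_refl.
Qed.
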